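(* Let $K$ be a field, $m\ge2$, $d_1,\ldots,d_m$ positive integers, and $b_i=\prod_{j\ne i}d_j$ for $1\le i\le m$. Let $I_{\mathcal{A}}\subset K[x_1,\ldots,x_m,y_1,\ldots,y_m]$ be the kernel of the $K$-algebra homomorphism $\phi$ to $K[t_1,\ldots,t_{m+1}]$ given by $\phi(x_i)=t_1^{b_i}t_{i+1}$ and $\phi(y_i)=t_{i+1}$ for $1\le i\le m$. Then $\mathrm{bar}(I_{\mathcal{A}})\ge\frac{m(m-1)}{2}$.
   Context: $\mathcal{A}$ is the set of columns of the $(m+1)\times 2m$ matrix $\begin{pmatrix} b_1\ \cdots\ b_m & 0\ \cdots\ 0\\ I_m & I_m\end{pmatrix}$ (Lawrence lifting of $(b_1,\ldots,b_m)$). $\mathrm{bar}(I)$ is the least $s$ such that there are binomials $B_1,\ldots,B_s\in I$ with $\mathrm{rad}(I)=\mathrm{rad}(B_1,\ldots,B_s)$. *)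

(* Defs.v *)
From HB Require Import structures.
From mathcomp Require Import all_boot all_order all_algebra.
From mathcomp Require Import mpoly.
Set Implicit Arguments. Unset Strict Implicit. Unset Printing Implicit Defensive.
Import GRing.Theory.
Local Open Scope ring_scope.

(* Variables of K[x_1..x_m, y_1..y_m]: index i : 'I_(m+m);
   lshift m j <-> x_(j+1), rshift m j <-> y_(j+1).
   Variables of K[t_1..t_(m+1)]: ord0 <-> t_1, lift ord0 j <-> t_(j+2). *)

Definition bexp (m : nat) (d : 'I_m -> nat) (i : 'I_m) : nat :=
  (\prod_(j < m | j != i) d j)%N.

Definition phi_var (K : fieldType) (m : nat) (d : 'I_m -> nat)
  (k : 'I_(m + m)) : {mpoly K[m.+1]} :=
  match split k with
  | inl i => 'X_(@ord0 m) ^+ bexp d i * 'X_(lift ord0 i)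
  | inr i => 'X_(lift ord0 i)
  end.

Definition phi (K : fieldType) (m : nat) (d : 'I_m -> nat)
  (p : {mpoly K[m + m]}) : {mpoly K[m.+1]} :=
  mmap (@mpolyC m.+1 K) (@phi_var K m d) p.

Definition toric_ideal (K : fieldType) (m : nat) (d : 'I_m -> nat)
  (p : {mpoly K[m + m]}) : Prop := @phi K m d p = 0.

Definition is_binomial (K : fieldType) (n : nat) (p : {mpoly K[n]}) : Prop :=
  exists (a b : K) (u v : 'X_{1..n}), p = a *: 'X_[u] + b *: 'X_[v].

Definition gen_ideal (K : fieldType) (n s : nat) (B : 'I_s -> {mpoly K[n]})
  (p : {mpoly K[n]}) : Prop :=
  exists g : 'I_s -> {mpoly K[n]}, p = \sum_(i < s) g i * B i.

Definition radical (K : fieldType) (n : nat) (I : {mpoly K[n]} -> Prop)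
  (p : {mpoly K[n]}) : Prop := exists k : nat, I (p ^+ k).

(* bar(I) <= s is witnessed by s binomials in I with the same radical;
   bar(I) >= N iff every such family has s >= N. *)
Definition binomial_radical_gens (K : fieldType) (n : nat)
  (I : {mpoly K[n]} -> Prop) (s : nat) : Prop :=
  exists B : 'I_s -> {mpoly K[n]},
    (forall i, is_binomial (B i) /\ I (B i)) /\
    (forall p, radical I p <-> radical (gen_ideal B) p).

(* Main.v *)
Require Import Defs.
From HB Require Import structures.
From mathcomp Require Import all_boot all_order all_algebra.
From mathcomp Require Import mpoly.
From mathcomp Require Import zify.
Set Implicit Arguments. Unset Strict Implicit. Unset Printing Implicit Defensive.
Import GRing.Theory.
Local Open Scope ring_scope.

Section S.
Variables (K : fieldType) (m : nat) (d : 'I_m -> nat).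

Definition blk (k : 'I_(m + m)) : 'I_m :=
  match split k with inl i => i | inr i => i end.

Definition ev (k : 'I_(m + m)) : 'X_{1..m.+1} :=
  match split k with
  | inl i => (U_(@ord0 m) *+ bexp d i + U_(lift ord0 i))%MM
  | inr i => U_(lift ord0 i)%MM
  end.

Definition mu (u : 'X_{1..m + m}) : 'X_{1..m.+1} :=
  (\sum_(k < m + m) (ev k *+ u k))%MM.

Lemma phi_varE k : phi_var K d k = 'X_[ev k].
Proof.
rewrite /phi_var /ev; case: (split k) => i.
  by rewrite mpolyXD mpolyXn.
by [].
Qed.

Lemma phiX u : @phi K m d ('X_[u]) = 'X_[mu u].
Proof.
rewrite /phi mmapX /mmap1 /mu -mprodXnE.
by apply: eq_bigr => k _; rewrite phi_varE.
Qed.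

Lemma split_l i : split (lshift m i) = inl i :> ('I_m + 'I_m)%type.
Proof. exact: (unsplitK (inl i)). Qed.
Lemma split_r i : split (rshift m i) = inr i :> ('I_m + 'I_m)%type.
Proof. exact: (unsplitK (inr i)). Qed.

Lemma mu_ord0 u : mu u ord0 = (\sum_(i < m) bexp d i * u (lshift m i))%N.
Proof.
rewrite /mu mnm_sumE big_split_ord /= [X in (_ + X)%N]big1 ?addn0.
  by apply: eq_bigr => i _; rewrite mulmnE /ev split_l mnmDE mulmnE !mnm1E /= addn0 mul1n mulnC.
by move=> i _; rewrite mulmnE /ev split_r mnm1E.
Qed.

Lemma mu_lift u i : mu u (lift ord0 i) = (u (lshift m i) + u (rshift m i))%N.
Proof.
rewrite /mu mnm_sumE big_split_ord /=.
congr (_ + _)%N.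
  rewrite (bigD1 i) //= big1 ?addn0; last first.
    by move=> j /negbTE ji; rewrite mulmnE /ev split_l mnmDE mulmnE !mnm1E /= (inj_eq (@lift_inj _ _)) ji addn0.
  by rewrite !mulmnE /ev split_l mnmDE mulmnE !mnm1E /= eqxx mul1n.
rewrite (bigD1 i) //= big1 ?addn0; last first.
  by move=> j /negbTE ji; rewrite mulmnE /ev split_r !mnm1E /= (inj_eq (@lift_inj _ _)) ji.
by rewrite !mulmnE /ev split_r !mnm1E /= eqxx mul1n.
Qed.

Definition blocks u := [set i : 'I_m | (0 < mu u (lift ord0 i))%N].

Lemma bexp_gt0 i : (forall j, 0 < d j)%N -> (0 < bexp d i)%N.
Proof. by move=> hd; apply: prodn_cond_gt0 => j _; apply: hd. Qed.

Lemma mu_inj_small u v : (forall j, 0 < d j)%N -> mu u = mu v ->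
  (#|blocks u| <= 1)%N -> u = v.
Proof.
move=> hd huv hc.
have Hl i : (u (lshift m i) + u (rshift m i) = v (lshift m i) + v (rshift m i))%N.
  by rewrite -!mu_lift huv.
have H0 i : i \notin blocks u -> u (lshift m i) = 0%N /\ u (rshift m i) = 0%N.
  rewrite inE mu_lift -leqNgt leqn0 addn_eq0 => /andP[/eqP -> /eqP ->]; done.
have Hx i : i \in blocks u -> u (lshift m i) = v (lshift m i).
  move=> ib.
  have := congr1 (fun w : 'X_{1..m.+1} => w ord0) huv; rewrite /= !mu_ord0.
  rewrite (bigD1 i) //= [X in (_ = X)%N](bigD1 i) //= !big1 ?addn0.
  - by move/eqP; rewrite eqn_pmul2l ?bexp_gt0 // => /eqP.
  - move=> j ji; have jb : j \notin blocks u.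
      apply/negP => jb; move/card_le1_eqP: hc => /(_ j i jb ib) ji'.
      by rewrite ji' eqxx in ji.
    have := H0 j jb; have := Hl j; case: (H0 j jb) => -> -> /= e _.
    suff -> : v (lshift m j) = 0%N by rewrite muln0.
    by move: e; rewrite addn0 => /esym/eqP; rewrite addn_eq0 => /andP[/eqP].
  - move=> j ji; have jb : j \notin blocks u.
      apply/negP => jb; move/card_le1_eqP: hc => /(_ j i jb ib) ji'.
      by rewrite ji' eqxx in ji.
    by case: (H0 j jb) => -> _; rewrite muln0.
apply/mnmP => k; case: (split_ordP k) => i -> {k}.
  case: (boolP (i \in blocks u)) => ib; first exact: Hx.
  have := Hl i; case: (H0 i ib) => -> -> /esym/eqP; rewrite addn_eq0.
  by case/andP => /eqP.
case: (boolP (i \in blocks u)) => ib.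
  by have := Hl i; rewrite Hx //; move/addnI.
have := Hl i; case: (H0 i ib) => -> -> /esym/eqP; rewrite addn_eq0.
by case/andP => _ /eqP.
Qed.

Lemma phiB (a b : K) u v :
  @phi K m d (a *: 'X_[u] + b *: 'X_[v]) = a *: 'X_[mu u] + b *: 'X_[mu v].
Proof.
by rewrite /phi mmapD !mmapZ -/(@phi K m d _) -/(@phi K m d _) !phiX !mul_mpolyC.
Qed.

Lemma binom_ker (a b : K) u v :
  @phi K m d (a *: 'X_[u] + b *: 'X_[v]) = 0 ->
  a *: 'X_[u] + b *: 'X_[v] != 0 -> mu u = mu v /\ u != v.
Proof.
rewrite phiB => h0 hnz.
have cf w : (a *: 'X_[mu u] + b *: 'X_[mu v] : {mpoly K[m.+1]})@_w = 0.
  by rewrite h0 mcoeff0.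
have [e|ne] := eqVneq (mu u) (mu v); last first.
  have := cf (mu u); rewrite mcoeffD !mcoeffZ !mcoeffX eqxx eq_sym (negbTE ne) mulr1 mulr0 addr0 => ha.
  have := cf (mu v); rewrite mcoeffD !mcoeffZ !mcoeffX eqxx (negbTE ne) mulr1 mulr0 add0r => hb.
  by move: hnz; rewrite ha hb !scale0r addr0 eqxx.
split => //; apply/negP => /eqP euv; move: hnz; rewrite euv -scalerDl.
have := cf (mu v); rewrite e mcoeffD !mcoeffZ !mcoeffX eqxx !mulr1 => ->.
by rewrite scale0r eqxx.
Qed.

Definition sig (A : {set 'I_m}) (p : {mpoly K[m + m]}) : {mpoly K[m + m]} :=
  mmap (@mpolyC (m + m) K) (fun k => if blk k \in A then 'X_k else 0) p.

Lemma blk_in (u : 'X_{1..m + m}) k : (0 < u k)%N -> blk k \in blocks u.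
Proof.
rewrite /blk inE; case: (split_ordP k) => i -> h; rewrite ?split_l ?split_r mu_lift.
  by rewrite ltn_addr.
by rewrite ltn_addl.
Qed.

Lemma sigX A u : sig A 'X_[u] = if blocks u \subset A then 'X_[u] else 0.
Proof.
rewrite /sig mmapX /mmap1; case: ifP => hs.
  rewrite mpolyXE_id; apply: eq_bigr => k _.
  case: (posnP (u k)) => [->|hk]; first by rewrite !expr0.
  by rewrite (subsetP hs _ (blk_in hk)).
case/subsetPn: hs => i ib iA.
have : exists k, (0 < u k)%N /\ blk k = i.
  move: ib; rewrite inE mu_lift.
  case: (posnP (u (lshift m i))) => [h0|hp] hs.
    by exists (rshift m i); rewrite /blk split_r; move: hs; rewrite h0.
  by exists (lshift m i); rewrite /blk split_l.
case=> k [hk bk]; rewrite (bigD1 k) //= bk (negbTE iA) expr0n.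
by rewrite eqn0Ngt hk mul0r.
Qed.

Lemma sig_binom A (a b : K) u v : mu u = mu v ->
  sig A (a *: 'X_[u] + b *: 'X_[v]) =
  if blocks u \subset A then a *: 'X_[u] + b *: 'X_[v] else 0.
Proof.
move=> e; rewrite /sig mmapD !mmapZ -/(sig A _) -/(sig A _) !sigX.
have -> : blocks v = blocks u by rewrite /blocks e.
by case: ifP; rewrite ?mulr0 ?addr0 // !mul_mpolyC.
Qed.

Lemma muE u c : mu u c = (\sum_(k < m + m) ev k c * u k)%N.
Proof. by rewrite /mu mnm_sumE; apply: eq_bigr => k _; rewrite mulmnE. Qed.

Lemma muD u v : mu (u + v)%MM = (mu u + mu v)%MM.
Proof.
by apply/mnmP => c; rewrite mnmDE !muE -big_split /=; apply: eq_bigr => k _; rewrite mnmDE mulnDr.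
Qed.

Lemma muU k n : mu (U_(k) *+ n)%MM = (ev k *+ n)%MM.
Proof.
apply/mnmP => c; rewrite muE mulmnE (bigD1 k) //= big1 ?addn0.
  by rewrite mulmnE mnm1E eqxx mul1n.
by move=> j /negbTE jk; rewrite mulmnE mnm1E eq_sym jk muln0.
Qed.

Lemma lr_neq (i j : 'I_m) : (lshift m i == rshift m j) = false.
Proof.
by rewrite -val_eqE /= ltn_eqF // (leq_trans (ltn_ord i)) // leq_addr.
Qed.

Lemma rl_neq (i j : 'I_m) : (rshift m j == lshift m i) = false.
Proof. by rewrite eq_sym lr_neq. Qed.

Lemma bexp_mul i : (bexp d i * d i = \prod_(k < m) d k)%N.
Proof. by rewrite /bexp [in RHS](bigD1 i) //= mulnC. Qed.

Lemma exists_f (A : {set 'I_m}) : (forall j, 0 < d j)%N -> #|A| = 2 ->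
  exists f : {mpoly K[m + m]}, [/\ toric_ideal d f, sig A f = f & f != 0].
Proof.
move=> hd /eqP /cards2P [i [j [ij ->]]].
pose u0 := (U_(lshift m i) *+ d i + U_(rshift m j) *+ d j)%MM.
pose v0 := (U_(rshift m i) *+ d i + U_(lshift m j) *+ d j)%MM.
have emu : mu u0 = mu v0.
  rewrite /u0 /v0 !muD !muU /ev !split_l !split_r.
  have hb := bexp_mul i; rewrite -(bexp_mul j) in hb.
  apply/mnmP => c; rewrite !mnmDE !mulmnE !mnmDE !mulmnE !mnm1E.
  case: (ord0 == c); case: (lift ord0 i == c); case: (lift ord0 j == c) => /=;
    rewrite ?(mul0n, mul1n, add0n, addn0); try lia.
have hbl : blocks u0 = [set i; j].
  apply/setP => l; rewrite !inE mu_lift /u0 !mnmDE !mulmnE !mnm1E.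
  rewrite !(inj_eq (@lshift_inj _ _)) !(inj_eq (@rshift_inj _ _)) lr_neq [rshift _ _ == _]eq_sym lr_neq.
  have := hd i; have := hd j.
  rewrite [l == i]eq_sym [l == j]eq_sym.
  case: (eqVneq i l) => [ei|il]; case: (eqVneq j l) => [ej|jl] //=;
    rewrite ?(mul0n, mul1n, add0n, addn0, muln0, muln1) //; try lia.
have nuv : u0 != v0.
  apply/negP => /eqP /mnmP /(_ (lshift m i)).
  rewrite /u0 /v0 !mnmDE !mulmnE !mnm1E eqxx !rl_neq.
  rewrite (inj_eq (@lshift_inj _ _)) eq_sym (negbTE ij) /=.
  by have := hd i; lia.
exists (1 *: 'X_[u0] + (-1) *: 'X_[v0]); split.
- by rewrite /toric_ideal phiB emu scaleN1r scale1r subrr.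
- by rewrite sig_binom // hbl subxx.
- apply/negP => /eqP /mpolyP /(_ u0); rewrite mcoeffD !mcoeffZ !mcoeffX eqxx mcoeff0.
  by rewrite eq_sym (negbTE nuv) mulr0 addr0 mulr1 => /eqP; rewrite oner_eq0.
Qed.

Lemma sig0 A : sig A 0 = 0.
Proof. by rewrite /sig raddf0. Qed.

Lemma uniq_pair (p : {mpoly K[m + m]}) (A A' : {set 'I_m}) :
  (forall j, 0 < d j)%N ->
  is_binomial p -> toric_ideal d p -> #|A| = 2 -> #|A'| = 2 ->
  sig A p != 0 -> sig A' p != 0 -> A = A'.
Proof.
move=> hd [a [b [u [v ->]]]] hk hA hA' nA nA'.
have nz : a *: 'X_[u] + b *: 'X_[v] != 0.
  by apply: contraNneq nA => ->; rewrite sig0.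
have [e nuv] := binom_ker hk nz.
have c2 : (2 <= #|blocks u|)%N.
  rewrite ltnNge; apply/negP => hc; move/negP: nuv; apply.
  by apply/eqP; apply: mu_inj_small.
have get (C : {set 'I_m}) : #|C| = 2 -> sig C (a *: 'X_[u] + b *: 'X_[v]) != 0 -> blocks u = C.
  move=> hC; rewrite sig_binom //; case: ifP => hs; last by rewrite eqxx.
  move=> _; apply/eqP; rewrite eqEcard hs hC.
  done.
by rewrite -(get _ hA nA) -(get _ hA' nA').
Qed.

Lemma exists_gen (s : nat) (B : 'I_s -> {mpoly K[m + m]}) (A : {set 'I_m}) :
  (forall j, 0 < d j)%N -> #|A| = 2 ->
  (forall p, radical (@toric_ideal K m d) p <-> radical (gen_ideal B) p) ->
  exists l, sig A (B l) != 0.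
Proof.
move=> hd hA hrad.
have [f [hf sf nf]] := exists_f hd hA.
have : radical (gen_ideal B) f by apply/hrad; exists 1%N; rewrite expr1.
case=> k [g hg].
case: (pickP (fun l => sig A (B l) != 0)) => [l hl|h0]; first by exists l.
have : sig A (f ^+ k) = 0.
  rewrite hg /sig raddf_sum /= big1 // => l _.
  by rewrite rmorphM /= -/(sig A (B l)); move/negbFE: (h0 l) => /eqP ->; rewrite mulr0.
rewrite /sig rmorphXn /= -/(sig A f) sf => /eqP; rewrite expf_eq0 (negbTE nf) andbF.
done.
Qed.
End S.
Theorem theorem4p10 (K : fieldType) (m : nat) (d : 'I_m -> nat) :
  (2 <= m)%N -> (forall i, (0 < d i)%N) ->
  forall s : nat, binomial_radical_gens (@toric_ideal K m d) s ->
  (m * (m - 1) <= 2 * s)%N.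
Proof.
move=> hm hd s [B [hB hrad]].
pose P := [set A : {set 'I_m} | #|A| == 2%N].
have hC : (m * (m - 1) = 2 * #|P|)%N.
  rewrite /P card_draws card_ord.
  have h := bin_ffact m 2; rewrite ffactnS ffactn1 (_ : 2`! = 2%N) // in h.
  by rewrite -subn1 in h; rewrite -h mulnC.
rewrite hC leq_pmul2l //.
case: (set_0Vmem P) => [-> | [A0 hA0]]; first by rewrite cards0.
have hA0' : #|A0| = 2 by move: hA0; rewrite inE => /eqP.
have [l0 _] := exists_gen hd hA0' hrad.
pose g (A : {set 'I_m}) := odflt l0 [pick l | sig A (B l) != 0].
have hg A : A \in P -> sig A (B (g A)) != 0.
  rewrite inE => /eqP hA; rewrite /g; case: pickP => [l hl //|h0].
  have [l hl] := exists_gen (K:=K) hd hA hrad.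
  by move: (h0 l); rewrite hl.
rewrite -[s]card_ord; apply: (@leq_card_in _ _ g) => A1 A2 h1 h2 e.
have c1 : #|A1| = 2 by move: h1; rewrite inE => /eqP.
have c2 : #|A2| = 2 by move: h2; rewrite inE => /eqP.
have [hb hk] := hB (g A1).
apply: (uniq_pair hd hb hk c1 c2 (hg _ h1)).
by rewrite e; apply: hg.
Qed.
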